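(* Let $\delta=x^{\mathbf d}f(\theta)$ be a homogeneous differential operator of degree $\mathbf d$ with $-\mathbf d$ in the interior of $\sigma^\vee$, and write $\mathbf d=q\mathbf e$ with $q\in\mathbb Z_{\ge1}$ and $\mathbf e\in\mathbb Z^d$ primitive. Then $\delta$ fixes some nonzero monomial ideal of $R$ if and only if (1) $\operatorname{val}(\mathbf a)>-\infty$ for all $\mathbf a\in S$; (2) for all $\mathbf a\in V'_{\mathrm{mon}}(f)$ and $i=0,\dots,q-1$, $\mathbf a-i\mathbf e\in V_{\mathrm{mon}}(f)$; (3) for all $\mathbf a,\mathbf b\in V'_{\mathrm{mon}}(f)$, $\mathbf a-\mathbf b\notin S-\mathbf e$. In this case the only nonzero monomial ideal fixed by $\delta$ is $I=(x^{\mathbf a}\mid\mathbf a\in V'_{\mathrm{mon}}(f)\cap S)$, and $\operatorname{Exp} I=\{\mathbf a\in S:\operatorname{pval}(\mathbf a)\ge 0\}$.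
   Context: Standing notation. Fix $d\ge 1$. Let $\sigma\subseteq\mathbb R^d$ be a full-dimensional, strongly convex rational polyhedral cone, so $\sigma^\vee$ is full-dimensional and strongly convex. $S=\sigma^\vee\cap\mathbb Z^d$, $R=\mathbb C[S]$ with monomial basis $x^{\mathbf a}$, $\mathbf a\in S$. $h_1,\dots,h_n$ are the primitive support functions of the facets of $\sigma^\vee$, so $S=\{\mathbf a\in\mathbb Z^d:h_i(\mathbf a)\ge0\ \forall i\}$. $(g,m)!=\prod_{j=0}^m(g-j)$ for $m\ge0$, $=1$ for $m<0$; $H_{\mathbf d}=\prod_i(h_i,h_i(-\mathbf d)-1)!$. For $f$ divisible by $H_{\mathbf d}$, $\delta=x^{\mathbf d}f(\theta)$ acts by $\delta(x^{\mathbf a})=f(\mathbf a)x^{\mathbf a+\mathbf d}$. $\operatorname{Exp} I=\{\mathbf a\in S:x^{\mathbf a}\in I\}$; $I$ is $\delta$-fixed if $\delta(I)=I$. $V_{\mathrm{mon}}(f)=\{\mathbf a\in\mathbb Z^d:f(\mathbf a)=0\}$; $S-\mathbf e=\{\mathbf s-\mathbf e:\mathbf s\in S\}$. For $\mathbf a\in\mathbb Z^d$, $\operatorname{val}(\mathbf a)=\inf\{t\in\mathbb R:\mathbf a+t\mathbf d\in V_{\mathrm{mon}}(f)\}\in\mathbb R\cup\{\pm\infty\}$ ($\inf\emptyset=+\infty$). When $\operatorname{val}(\mathbf a)$ is finite, $\operatorname{pval}(\mathbf a)=\max\{t\in[\operatorname{val}(\mathbf a),\operatorname{val}(\mathbf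 a)+1):\mathbf a+t\mathbf d\in V_{\mathrm{mon}}(f)\}$ and $\operatorname{vpt}(\mathbf a)=\mathbf a+\operatorname{pval}(\mathbf a)\mathbf d$. $V'_{\mathrm{mon}}(f)=\{\operatorname{vpt}(\mathbf a):\mathbf a\in\mathbb Z^d,\ \operatorname{val}(\mathbf a)\text{ finite}\}$. *)

(* Defs.v *)
From Stdlib Require Import Reals.
From Coquelicot Require Import Rbar Lub.
From mathcomp Require Import all_boot all_order all_algebra.
From mathcomp Require Import complex Rstruct mpoly.
Import GRing.Theory Num.Theory.

Set Implicit Arguments.
Unset Strict Implicit.
Unset Printing Implicit Defensive.

Local Open Scope ring_scope.

Notation CC := (complex R).

Section Defs.
Variable d : nat.

Notation vec := 'rV[int]_d.

Definition lf (h a : vec) : int := \sum_(k < d) h 0 k * a 0 k.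

Definition primitive_vec (e : vec) : Prop :=
  forall (k : int) (v : vec), e = k *: v -> k = 1 \/ k = -1.

(* h_1..h_n are the primitive support functions of the facets of sigma^vee,
   where sigma is a full-dimensional strongly convex rational polyhedral cone:
   - each h_i is primitive;
   - sigma^vee = {x | h_i(x) >= 0} is full-dimensional (sigma strongly convex);
   - sigma^vee is strongly convex (sigma full-dimensional);
   - the system is irredundant, so each h_i defines a facet. *)
Definition facet_data (n : nat) (h : 'I_n -> vec) : Prop :=
  [/\ forall i, primitive_vec (h i),
      exists a : vec, forall i, 0 < lf (h i) a,
      forall a : vec, (forall i, lf (h i) a = 0) -> a = 0 &
      forall i, exists a : vec, lf (h i) a < 0 /\
                 forall j, j != i -> 0 <= lf (h j) a].

Section Cone.
Variables (n : nat) (h : 'I_n -> vec).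

(* S = sigma^vee ∩ Z^d *)
Definition inS (a : vec) : Prop := forall i, 0 <= lf (h i) a.

Definition in_interior (a : vec) : Prop := forall i, 0 < lf (h i) a.

Definition hpoly (i : 'I_n) : {mpoly CC[d]} :=
  \sum_(k < d) (h i 0 k)%:~R *: 'X_k.

Definition ffact (g : {mpoly CC[d]}) (m : int) : {mpoly CC[d]} :=
  match m with
  | Posz k => \prod_(j < k.+1) (g - (j%:R : {mpoly CC[d]}))
  | Negz _ => 1
  end.

Definition Hpoly (dd : vec) : {mpoly CC[d]} :=
  \prod_(i < n) ffact (hpoly i) (lf (h i) (- dd) - 1).

Definition mdvd (g f : {mpoly CC[d]}) : Prop := exists r, f = g * r.

Definition evalZ (f : {mpoly CC[d]}) (a : vec) : CC :=
  f.@[fun k => (a 0 k)%:~R].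

Definition Vmon (f : {mpoly CC[d]}) (a : vec) : Prop := evalZ f a = 0.

(* ---- The ring R = C[S], as the C-vector space with basis x^a (a in S):
   an element is a finitely supported coefficient function with support in S. *)
Definition elt := vec -> CC.

Definition inR (p : elt) : Prop :=
  (exists s : seq vec, forall a, p a != 0 -> a \in s) /\
  (forall a, p a != 0 -> inS a).

Definition mono (a : vec) : elt := fun b => if b == a then 1 else 0.

(* the operator delta = x^dd f(theta): delta(x^a) = f(a) x^(a+dd),
   extended linearly *)
Definition delta (f : {mpoly CC[d]}) (dd : vec) (p : elt) : elt :=
  fun b => evalZ f (b - dd) * p (b - dd).

Definition monideal_of (E : vec -> Prop) : elt -> Prop :=
  fun p => inR p /\ forall a, p a != 0 -> E a.

Definition monideal (I : elt -> Prop) : Prop :=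
  exists E : vec -> Prop,
    [/\ forall a, E a -> inS a,
        forall a b, E a -> inS b -> E (a + b) &
        forall p, I p <-> monideal_of E p].

Definition gen_monideal (G : vec -> Prop) : elt -> Prop :=
  monideal_of (fun c => exists a b, [/\ G a, inS a, inS b & c = a + b]).

Definition nonzero_ideal (I : elt -> Prop) : Prop :=
  exists p, I p /\ exists a, p a != 0.

Definition fixes (f : {mpoly CC[d]}) (dd : vec) (I : elt -> Prop) : Prop :=
  forall p, I p <-> exists p', I p' /\ forall b, delta f dd p' b = p b.

Definition Exp (I : elt -> Prop) (a : vec) : Prop := inS a /\ I (mono a).

Definition on_line (a : vec) (t : R) (dd b : vec) : Prop :=
  forall k, (b 0 k)%:~R = (a 0 k)%:~R + t * (dd 0 k)%:~R :> R.

Definition Tset (f : {mpoly CC[d]}) (dd a : vec) (t : R) : Prop :=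
  exists b, on_line a t dd b /\ Vmon f b.

(* val(a) = inf Tset in R ∪ {±oo}, inf of empty = +oo *)
Definition valuation (f : {mpoly CC[d]}) (dd a : vec) : Rbar := Glb_Rbar (Tset f dd a).

Definition is_pval (f : {mpoly CC[d]}) (dd a : vec) (t : R) : Prop :=
  exists v : R, [/\ valuation f dd a = Rbar.Finite v,
    Tset f dd a t, (v <= t) && (t < v + 1) &
    forall t', Tset f dd a t' -> (v <= t') && (t' < v + 1) -> (t' <= t)].

Definition Vmon' (f : {mpoly CC[d]}) (dd b : vec) : Prop :=
  exists (a : vec) (t : R), is_pval f dd a t /\ on_line a t dd b.

End Cone.
End Defs.

(* Main.v *)
Require Import Defs.
From Stdlib Require Import Reals.
From Coquelicot Require Import Rbar Lub.
From mathcomp Require Import all_boot all_order all_algebra.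
From mathcomp Require Import complex Rstruct mpoly.
Import Order.TTheory GRing.Theory Num.Theory.
Local Open Scope ring_scope.
From mathcomp Require Import zify ring.
From Stdlib Require Import Lia.

Lemma lfD d (h a b : 'rV[int]_d) : lf h (a + b) = lf h a + lf h b.
Proof. rewrite /lf -big_split /=; apply: eq_bigr => k _; by rewrite !mxE mulrDr. Qed.
Lemma lfZ d (h a : 'rV[int]_d) (k : int) : lf h (k *: a) = k * lf h a.
Proof. rewrite /lf mulr_sumr; apply: eq_bigr => j _; by rewrite !mxE mulrCA. Qed.
Lemma lfN d (h a : 'rV[int]_d) : lf h (- a) = - lf h a.
Proof. rewrite /lf -sumrN; apply: eq_bigr => j _; by rewrite !mxE mulrN. Qed.
Lemma lfB d (h a b : 'rV[int]_d) : lf h (a - b) = lf h a - lf h b.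
Proof. by rewrite lfD lfN. Qed.

Lemma prim_int d (e : 'rV[int]_d) (k0 : 'I_d) (D : int) (x : 'I_d -> int) :
  primitive_vec e -> e 0 k0 != 0 ->
  (forall k, x k * e 0 k0 = D * e 0 k) -> exists j : int, forall k, x k = j * e 0 k.
Proof.
move=> pe He0 Hx.
pose r : rat := D%:~R / (e 0 k0)%:~R.
have Hr k : r * (e 0 k)%:~R = (x k)%:~R.
  rewrite /r mulrAC -intrM -Hx intrM mulfK //; by rewrite intr_eq0.
have HN k : numq r * e 0 k = denq r * x k.
  apply: (@intr_inj rat); rewrite !intrM numqE -Hr; by rewrite mulrAC mulrC.
have Hdv (k : 'I_d) : (denq r %| e ord0 k)%Z.
  have : (denq r %| e ord0 k * numq r)%Z by rewrite mulrC HN dvdz_mulr.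
  rewrite Gauss_dvdzl //. rewrite /coprimez gcdzC; exact: coprime_num_den.
pose v : 'rV[int]_d := \row_k divz (e ord0 k) (denq r).
have Hev : e = denq r *: v.
  apply/matrixP => i k; rewrite !mxE (ord1 i) mulrC divzK //.
have Hd1 : denq r = 1.
  case: (pe _ _ Hev) => // Hm. have := denq_gt0 r. by rewrite Hm.
exists (numq r) => k; by rewrite HN Hd1 mul1r.
Qed.

Section Main.
Variables (d n : nat) (h : 'I_n -> 'rV[int]_d) (f : {mpoly CC[d]}) (dd e : 'rV[int]_d) (q : nat).
Hypotheses (d0 : (0<d)%N) (fd : facet_data h) (Hdiv : mdvd (Hpoly h dd) f)
  (Hint : in_interior h (-dd)) (q0 : (0<q)%N) (pe : primitive_vec e) (dde : dd = q%:Z *: e).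

Lemma inS_add a b : inS h a -> inS h b -> inS h (a + b).
Proof. move=> Ha Hb i; rewrite lfD; exact: addr_ge0. Qed.
Lemma inS_scale (k : int) a : 0 <= k -> inS h a -> inS h (k *: a).
Proof. move=> Hk Ha i; rewrite lfZ; exact: mulr_ge0. Qed.

Lemma int_e i : 0 < lf (h i) (- e).
Proof.
by have := Hint i; rewrite dde -scalerN lfZ pmulr_rgt0 // ltz_nat.
Qed.
Lemma negeS : inS h (- e).
Proof. move=> i; exact: Order.POrderTheory.ltW (int_e i). Qed.

Lemma n0 : (0 < n)%N.
Proof.
case: fd => _ _ H3 _; case: n h H3 => [|m] // h' H3.
have := H3 (const_mx 1) (fun i => match i with Ordinal _ hi => False_ind _ (notF hi) end).
move/matrixP => /(_ 0 (Ordinal d0)); by rewrite !mxE.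
Qed.
Definition i0 : 'I_n := Ordinal n0.

Lemma lowS c : exists K : int, 0 <= K /\ inS h (c - K *: e).
Proof.
exists (\sum_i `|lf (h i) c|); split; first exact: sumr_ge0.
move=> i; rewrite lfB lfZ -mulrN -lfN.
have h1 : `|lf (h i) c| <= \sum_i `|lf (h i) c| by rewrite (bigD1 i) //= lerDl sumr_ge0.
have h2 := int_e i. have h3 : 0 <= \sum_i `|lf (h i) c| by exact: sumr_ge0.
set K := \sum_i `|lf (h i) c| in h1 h3 *. set x := lf (h i) (-e) in h2 *.
have h4 : K <= K * x by rewrite ler_peMr //; lia.
have h5 := ler_norm (- lf (h i) c). rewrite normrN in h5. lia.
Qed.

Lemma highS c : exists K : int, forall k, K <= k -> ~ inS h (c + k *: e).
Proof.
exists (`|lf (h i0) c| + 1) => k Hk /(_ i0); rewrite lfD lfZ.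
have := int_e i0; rewrite lfN. have := ler_norm (lf (h i0) c).
set x := lf (h i0) e; set y := lf (h i0) c => h0 h1.
have : 0 <= `|y| by exact: normr_ge0.
have : k <= k * (- x) by rewrite ler_peMr //; lia.
rewrite mulrN. lia.
Qed.

Lemma eval_hpoly i x : evalZ (hpoly h i) x = (lf (h i) x)%:~R.
Proof.
rewrite /evalZ /hpoly /lf raddf_sum rmorph_sum /=; apply: eq_bigr => k _.
by rewrite mevalZ mevalXU intrM.
Qed.

Lemma HZ x : (exists i, 0 <= lf (h i) x < lf (h i) (-dd)) -> evalZ f x = 0.
Proof.
case=> i /andP [H1 H2]; case: Hdiv => r ->.
rewrite /evalZ mevalM /Hpoly rmorph_prod /= (bigD1 i) //= -/(evalZ _ x).
have [m Hm] : exists m : nat, lf (h i) (-dd) - 1 = m%:Z.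
  by exists `|lf (h i) (-dd) - 1|%N; lia.
have [j Hj] : exists j : nat, lf (h i) x = j%:Z by exists `|lf (h i) x|%N; lia.
have hj : (j < m.+1)%N by lia.
rewrite Hm /ffact /evalZ rmorph_prod /= (bigD1 (Ordinal hj)) //=.
by rewrite mevalB -/(evalZ _ x) eval_hpoly rmorph_nat Hj subrr !mul0r.
Qed.

Lemma lf_ndd i : lf (h i) (- dd) = q%:Z * lf (h i) (- e).
Proof. by rewrite dde -scalerN lfZ. Qed.

Lemma Hstep x : inS h x -> evalZ f x != 0 -> inS h (x + dd).
Proof.
move=> Hx Hf; case: (boolP [forall i, 0 <= lf (h i) (x + dd)]).
  by move/forallP.
rewrite negb_forall => /existsP [i Hi]; case/negP: Hf; apply/eqP; apply: HZ.
exists i; have := Hx i; move: Hi; rewrite lfD -(opprK dd) lfN.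
set u := lf (h i) (-dd); set w := lf (h i) x; lia.
Qed.

Lemma zero_exists c : exists k : int, evalZ f (c + k *: e) = 0.
Proof.
set s := lf (h i0) (- e); have hs : 0 < s := int_e i0.
exists (lf (h i0) c %/ s)%Z; apply: HZ; exists i0.
rewrite lfD lfZ lf_ndd -/s -(opprK e) lfN -/s.
have := divz_eq (lf (h i0) c) s; have := modz_ge0 (lf (h i0) c) (lt0r_neq0 hs).
have := ltz_pmod (lf (h i0) c) hs.
set k := (lf (h i0) c %/ s)%Z; set r := (lf (h i0) c %% s)%Z; set y := lf (h i0) c.
have : s <= q%:Z * s by rewrite ler_peMl //; lia.
nia.
Qed.

Lemma e_nz : exists k0, e 0 k0 != 0.
Proof.
case: (boolP [exists k, e 0 k != 0]) => [/existsP//|].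
rewrite negb_exists => /forallP He.
have E : e = 2%:Z *: 0.
  apply/matrixP => i k; rewrite (ord1 i) scaler0 mxE; by have := He k; rewrite negbK => /eqP.
by case: (pe _ _ E).
Qed.

Lemma qR_neq0 : (q%:R : R) != 0.
Proof. by rewrite pnatr_eq0 -lt0n. Qed.

Lemma on_lineE a t b : on_line a t dd b ->
  exists j : int, t = j%:~R / q%:R /\ b = a + j *: e.
Proof.
move=> Hl; case: e_nz => k0 Hk0.
have Hx k : ((b 0 k - a 0 k)%:~R : R) = t * q%:R * (e 0 k)%:~R.
  by rewrite intrB Hl dde mxE intrM addrC addKr mulrA.
have [j Hj] : exists j : int, forall k, b 0 k - a 0 k = j * e 0 k.
  apply: (@prim_int d e k0 (b 0 k0 - a 0 k0) (fun k => b 0 k - a 0 k)) => // k.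
  apply: (@intr_inj R); by rewrite !intrM !Hx mulrAC.
exists j; split.
  have := Hx k0; rewrite Hj intrM => /mulIf. rewrite intr_eq0 => /(_ Hk0) ->.
  by rewrite mulfK // qR_neq0.
apply/matrixP => i k; rewrite (ord1 i) !mxE -Hj addrC subrK; reflexivity.
Qed.

Lemma on_line_j a (j : int) : on_line a (j%:~R / q%:R) dd (a + j *: e).
Proof.
move=> k; rewrite dde !mxE intrD !intrM mulrA. rewrite (_ : (q%:Z)%:~R = q%:R :> R) // divfK //.
exact: qR_neq0.
Qed.

Lemma TsetE a t : Tset f dd a t <-> exists j : int, t = j%:~R / q%:R /\ Vmon f (a + j *: e).
Proof.
split.
  case=> b [Hl Hv]; case: (on_lineE _ _ _ Hl) => j [-> Hb]; exists j; split => //; by rewrite -Hb.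
case=> j [-> Hv]; exists (a + j *: e); split => //; exact: on_line_j.
Qed.

Lemma qR_gt0 : (0 : R) < q%:R.
Proof. by rewrite ltr0n. Qed.

Lemma divq_le (x y : int) : (x%:~R / q%:R <= y%:~R / q%:R :> R) = (x <= y).
Proof. by rewrite ler_pM2r ?invr_gt0 ?qR_gt0 // ler_int. Qed.
Lemma divq_lt (x y : int) : (x%:~R / q%:R < y%:~R / q%:R :> R) = (x < y).
Proof. by rewrite ltr_pM2r ?invr_gt0 ?qR_gt0 // ltr_int. Qed.
Lemma divq_inj (x y : int) : x%:~R / q%:R = y%:~R / q%:R :> R -> x = y.
Proof. move=> H; apply/eqP; rewrite eq_le -!divq_le H; by rewrite lexx. Qed.
Lemma divq_add1 (x : int) : x%:~R / q%:R + 1 = (x + q%:Z)%:~R / q%:R :> R.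
Proof. by rewrite intrD mulrDl divff // qR_neq0. Qed.

Definition Z c (j : int) := Vmon f (c + j *: e).

Lemma val_min c m : Z c m -> (forall j, j < m -> ~ Z c j) ->
  valuation f dd c = Rbar.Finite (m%:~R / q%:R).
Proof.
move=> Hm Hb; apply: is_glb_Rbar_unique; split.
  move=> x /TsetE [j [-> Hj]] /=; apply/RleP; rewrite divq_le.
  case: (lerP m j) => // /Hb; by move/(_ Hj).
move=> b Hlb; apply: Hlb; apply/TsetE; by exists m.
Qed.

Lemma val_minf c : (forall K : int, exists j, j < K /\ Z c j) -> valuation f dd c = m_infty.
Proof.
move=> HK; apply: is_glb_Rbar_unique; split; first by move=> x.
case=> [r||] // Hlb.
- set K := Num.floor (r * q%:R).
  case: (HK K) => j [HjK Hj].
  have := Hlb (j%:~R / q%:R); rewrite /= => /(_ (proj2 (TsetE _ _) (ex_intro _ j (conj erefl Hj)))).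
  move/RleP => Hr.
  have : r * q%:R <= j%:~R by rewrite -(divfK qR_neq0 (j%:~R)) ler_pM2r ?qR_gt0.
  have := floor_le (r * q%:R); rewrite -/K => h1 h2.
  have : (K%:~R : R) < K%:~R by apply: (le_lt_trans h1); apply: (le_lt_trans h2); rewrite ltr_int.
  by rewrite Order.POrderTheory.ltxx.
- case: (HK 0) => j [_ Hj]. have := Hlb (j%:~R / q%:R).
  by move/(_ (proj2 (TsetE _ _) (ex_intro _ j (conj erefl Hj)))).
Qed.

Lemma pval_of c m p : Z c m -> (forall j, j < m -> ~ Z c j) -> m <= p < m + q%:Z -> Z c p ->
  (forall j, p < j < m + q%:Z -> ~ Z c j) ->
  forall t, is_pval f dd c t <-> t = p%:~R / q%:R.
Proof.
move=> Hm Hb /andP [Hp1 Hp2] Hp Hab t; split.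
- case=> v [Hv Ht /andP [Hv1 Hv2] Hmax].
  rewrite (val_min _ _ Hm Hb) in Hv; case: Hv => Hv; subst v.
  case/TsetE: Ht => j [Ht Hj]; subst t.
  rewrite divq_add1 divq_le divq_lt in Hv1 Hv2 *.
  have Hpj : p <= j.
    rewrite -divq_le; apply: Hmax; first by apply/TsetE; exists p.
    by rewrite divq_add1 divq_le divq_lt Hp1 Hp2.
  have Hjp : j <= p by case: (lerP j p) => // Hlt; case: (Hab j) => //; rewrite Hlt Hv2.
  by have -> : j = p by apply/eqP; rewrite eq_le Hjp Hpj.
- move=> ->; exists (m%:~R / q%:R); split.
  + exact: val_min Hm Hb.
  + by apply/TsetE; exists p.
  + by rewrite divq_add1 divq_le divq_lt Hp1 Hp2.
  + move=> t' /TsetE [j [-> Hj]]; rewrite divq_add1 divq_le divq_lt => /andP [_ H2].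
    rewrite divq_le; case: (lerP j p) => // Hlt; case: (Hab j) => //; by rewrite Hlt H2.
Qed.

Definition strc c (p : int) := forall j : int, j <= p -> (Z c j <-> p - q%:Z < j).

Lemma q1 : 1 <= q%:Z. Proof. by rewrite lez_nat. Qed.

Lemma strc_pval c p : strc c p -> forall t, is_pval f dd c t <-> t = p%:~R / q%:R.
Proof.
move=> H; have hq := q1.
apply: (@pval_of c (p - q%:Z + 1) p).
- apply/H; lia.
- move=> j Hj; rewrite H; lia.
- apply/andP; split; lia.
- apply/H; lia.
- move=> j /andP [h1 h2]; lia.
Qed.

Lemma strc_val c p : strc c p -> valuation f dd c <> m_infty.
Proof.
move=> H; have hq := q1; rewrite (@val_min c (p - q%:Z + 1)) //.
- apply/H; lia.
- move=> j Hj; rewrite H; lia.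
Qed.

Lemma Zshift c k j : Z (c + k *: e) j <-> Z c (k + j).
Proof. by rewrite /Z -addrA -scalerDl. Qed.

Lemma strc_shift c p k : strc c p -> strc (c + k *: e) (p - k).
Proof. move=> H j Hj; rewrite Zshift H; lia. Qed.

Lemma strc_uniq c p p' : strc c p -> strc c p' -> p = p'.
Proof.
wlog Hle : p p' / p <= p'.
  move=> W H1 H2; case: (lerP p p') => Hl; first exact: W.
  by symmetry; apply: W => //; exact: Order.POrderTheory.ltW.
move=> H1 H2; have hq := q1; case: (lerP p' p) => Hl; first by apply/eqP; rewrite eq_le Hl Hle.
have A : Z c p by apply/H1; lia.
have B : p' - q%:Z < p by apply/(H2 p Hle).
have C : Z c (p' - q%:Z) by apply/H1; lia.
have := proj1 (H2 (p' - q%:Z) ltac:(lia)) C; lia.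
Qed.

Definition Good := forall c, exists p, strc c p.

Lemma Vmon'_strc (G : Good) a : Vmon' f dd a <-> strc a 0.
Proof.
split.
- case=> c [t [Hp Hl]]; case: (G c) => p Hs.
  move: (proj1 (strc_pval _ _ Hs t) Hp) => Ht; case: (on_lineE _ _ _ Hl) => j [Ht' ->].
  rewrite Ht in Ht'; have Hj := divq_inj _ _ Ht'; subst j.
  have := strc_shift _ _ p Hs; by rewrite subrr.
- move=> Hs; exists a, 0; split.
  + by apply/(strc_pval _ _ Hs); rewrite mul0r.
  + by move=> k; rewrite mul0r addr0.
Qed.

Lemma divq_ge0 (x : int) : (0 <= x%:~R / q%:R :> R) = (0 <= x).
Proof. by rewrite pmulr_lge0 ?invr_gt0 ?qR_gt0 // ler0z. Qed.

Lemma nat_top (P : nat -> Prop) N : P 0%N -> ~ P N -> exists m, P m /\ ~ P m.+1.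
Proof.
elim: N => [|N IH] H0 HN; first by [].
case: (Classical_Prop.classic (P N)) => HP; first by exists N.
exact: IH.
Qed.

Lemma nat_min (P : nat -> Prop) N : P N -> exists m, P m /\ forall k, (k < m)%N -> ~ P k.
Proof.
elim/ltn_ind: N => N IH HN.
case: (Classical_Prop.classic (exists k, (k < N)%N /\ P k)) => [[k [Hk Pk]]|Hno].
  exact: IH Hk Pk.
exists N; split => // k Hk Pk; apply: Hno; by exists k.
Qed.

Lemma nat_max (P : nat -> Prop) N : P 0%N -> exists i, [/\ (i <= N)%N, P i &
  forall k, (i < k)%N -> (k <= N)%N -> ~ P k].
Proof.
move=> H0; elim: N => [|N [i [Hi Pi Hk]]].
  exists 0%N; split => // k Hk1 Hk2; lia.
case: (Classical_Prop.classic (P N.+1)) => HN.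
  exists N.+1; split => // k Hk1 Hk2; lia.
exists i; split => //; first lia.
move=> k Hk1 Hk2; case: (ltngtP k N.+1) => Hc; [apply: Hk => //; lia | lia | by subst k].
Qed.

Lemma conds_good
  (c1 : forall a, inS h a -> valuation f dd a <> m_infty)
  (c2 : forall a, Vmon' f dd a -> forall i : nat, (i < q)%N -> Vmon f (a - i%:Z *: e)) :
  Good.
Proof.
move=> c.
case: (zero_exists c) => k0 Hk0.
have [K HK] : exists K, forall j, j < K -> ~ Z c j.
  apply: Classical_Prop.NNPP => Hno.
  case: (lowS c) => K0 [_ HK0]; apply: (c1 _ HK0); apply: val_minf => K.
  case: (Classical_Prop.classic (exists j, j < K - K0 /\ Z c j)) => [[j [Hj1 Hj2]]|Hn].
    exists (j + K0); split; first lia.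
    rewrite /Z (_ : c - K0 *: e + (j + K0) *: e = c + j *: e) //.
    apply/matrixP => i l; rewrite !mxE; ring.
  case: Hno; exists (K - K0) => j Hj Zj; apply: Hn; by exists j.
have HkK : K <= k0 by case: (lerP K k0) => // /HK.
case: (@nat_min (fun k : nat => Z c (K + k%:Z)) `|k0 - K|%N).
  by rewrite (_ : K + _ = k0) //; lia.
move=> k [Hk Hkmin]; set m := K + k%:Z.
have Hmin j : j < m -> ~ Z c j.
  move=> Hj; case: (lerP K j) => HKj; last exact: HK.
  have := Hkmin `|j - K|%N; rewrite (_ : K + _ = j); last lia.
  apply; lia.
case: (@nat_max (fun i : nat => Z c (m + i%:Z)) q.-1); first by rewrite addr0.
move=> i [Hi Pi Hmax]; set p := m + i%:Z.
have Hpv : is_pval f dd c (p%:~R / q%:R).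
  apply/(@pval_of c m p) => //.
  - apply/andP; split; lia.
  - move=> j /andP [Hj1 Hj2].
    have := Hmax `|j - m|%N; rewrite (_ : m + _ = j); last lia.
    apply; lia.
have HV : Vmon' f dd (c + p *: e) by exists c, (p%:~R / q%:R); split => //; exact: on_line_j.
exists p => j Hj; split.
- move=> Zj; case: (lerP m j) => Hmj; last by case: (Hmin j).
  lia.
- move=> Hj2; have := c2 _ HV `|p - j|%N ltac:(lia).
  rewrite /Z (_ : c + p *: e - `|p - j|%N%:Z *: e = c + j *: e) //.
  rewrite (_ : `|p - j|%N%:Z = p - j); last lia.
  apply/matrixP => a b; rewrite !mxE; ring.
Qed.

Section Core.
Variable E : 'rV[int]_d -> Prop.
Hypotheses (E1 : forall a, E a -> inS h a) (E2 : forall a b, E a -> inS h b -> E (a + b))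
  (EF : forall b, E b <-> E (b - dd) /\ evalZ f (b - dd) != 0) (EN : exists a0, E a0).

Lemma Edown c j k : E (c + j *: e) -> k <= j -> E (c + k *: e).
Proof.
move=> H Hk; have -> : c + k *: e = (c + j *: e) + (j - k) *: (- e).
  by rewrite scalerN -scaleNr opprB -addrA -scalerDl [j + _]addrC subrK.
apply: E2 => //; apply: inS_scale; [lia | exact: negeS].
Qed.

Lemma core_struct c : exists T, strc c T /\ (forall j, E (c + j *: e) <-> j <= T).
Proof.
case: EN => a0 Ha0.
have [j0 Hj0] : exists j0, E (c + j0 *: e).
  case: (lowS (c - a0)) => K [_ HK]; exists (- K).
  have -> : c + - K *: e = a0 + (c - a0 - K *: e).
    apply/matrixP => i l; rewrite !mxE; ring.
  exact: E2.
case: (highS c) => K HK.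
have HnE k : K <= k -> ~ E (c + k *: e) by move=> Hk /E1; apply: HK.
have [m [Hm1 Hm2]] : exists m : nat, E (c + (j0 + m%:Z) *: e) /\ ~ E (c + (j0 + m.+1%:Z) *: e).
  apply: (@nat_top (fun m : nat => E (c + (j0 + m%:Z) *: e)) `|K - j0|%N).
  - by rewrite addr0.
  - apply: HnE; lia.
set T := j0 + m%:Z.
have ET j : E (c + j *: e) <-> j <= T.
  split => Hj; last exact: Edown Hm1 Hj.
  case: (lerP j T) => // Hlt; case: Hm2; apply: Edown Hj _; lia.
exists T; split => // j Hj.
have Hb : (c + (j + q%:Z) *: e) - dd = c + j *: e.
  by rewrite dde scalerDl addrA addrK.
have H := EF (c + (j + q%:Z) *: e); rewrite Hb ET in H.
have Ej := proj2 (ET j) Hj.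
rewrite /Z /Vmon -/(evalZ f (c + j *: e)); split.
- move=> Hz; case: (lerP (j + q%:Z) T) => Hc; last by lia.
  by case: (H.1 Hc) => _; rewrite Hz eqxx.
- move=> Hlt; apply/eqP; apply/negPn/negP => Hnz.
  have := proj2 H (conj Ej Hnz). lia.
Qed.
Lemma core_good : Good.
Proof. move=> c; case: (core_struct c) => T [H _]; by exists T. Qed.

Lemma E_top a : strc a 0 -> E a /\ ~ E (a + e).
Proof.
move=> Ha; case: (core_struct a) => T [HT ET].
have T0 := strc_uniq _ _ _ HT Ha; subst T.
split.
- by have := proj2 (ET 0) (lexx _); rewrite scale0r addr0.
- by move=> H; have := proj1 (ET 1); rewrite scale1r => /(_ H).
Qed.

Lemma core_cond3 a b : Vmon' f dd a -> Vmon' f dd b -> ~ (exists s, inS h s /\ a - b = s - e).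
Proof.
move=> /(Vmon'_strc core_good) Ha /(Vmon'_strc core_good) Hb [s [Hs Hab]].
case: (E_top _ Ha) => _; apply.
have -> : a + e = b + s.
  by rewrite -(subrK b a) Hab addrAC subrK addrC.
apply: E2 => //; exact: (E_top _ Hb).1.
Qed.

Lemma core_Echar c : E c <-> inS h c /\ exists t, is_pval f dd c t /\ 0 <= t.
Proof.
case: (core_struct c) => T [HT ET].
have EC : E c <-> 0 <= T by rewrite -ET scale0r addr0.
split.
- move=> Hc; split; first exact: E1.
  exists (T%:~R / q%:R); split; first exact/(strc_pval _ _ HT).
  by rewrite divq_ge0; apply/EC.
- case=> _ [t [Ht Ht0]]; apply/EC.
  by move: Ht0; rewrite (proj1 (strc_pval _ _ HT t) Ht) divq_ge0.
Qed.

Lemma core_Egen c : E c <-> exists a b, [/\ Vmon' f dd a /\ inS h a, inS h a, inS h b & c = a + b].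
Proof.
split.
- move=> Hc; case: (core_struct c) => T [HT ET].
  have T0 : 0 <= T by apply/ET; rewrite scale0r addr0.
  have Ha : strc (c + T *: e) 0 by have := strc_shift _ _ T HT; rewrite subrr.
  have Ea := (E_top _ Ha).1.
  exists (c + T *: e), (T *: (- e)); split => //.
  + split; [exact/(Vmon'_strc core_good) | exact: E1].
  + exact: E1.
  + apply: inS_scale => //; exact: negeS.
  + by rewrite scalerN addrK.
- case=> a [b [[Ha _] _ Hb ->]]; apply: E2 => //.
  exact: (E_top _ (proj1 (Vmon'_strc core_good a) Ha)).1.
Qed.
End Core.

Lemma mono_in (E : 'rV[int]_d -> Prop) (E1 : forall a, E a -> inS h a) b :
  monideal_of h E (mono b) <-> E b.
Proof.
split.
- case=> _ /(_ b); rewrite /mono eqxx; apply; exact: oner_neq0.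
- move=> Eb; split; [split|].
  + exists [:: b] => a; rewrite /mono inE; case: (a =P b) => // _; by rewrite eqxx.
  + move=> a; rewrite /mono; case: (a =P b) => [->|] _; [exact: E1 | by rewrite eqxx].
  + move=> a; rewrite /mono; case: (a =P b) => [->|] //; by rewrite eqxx.
Qed.

Lemma fixes_of (E : 'rV[int]_d -> Prop) (E1 : forall a, E a -> inS h a)
  (EF : forall b, E b <-> E (b - dd) /\ evalZ f (b - dd) != 0) :
  fixes f dd (monideal_of h E).
Proof.
move=> p; split.
- case=> [[[s Hs] HS] HE].
  pose p' := fun y => if evalZ f y != 0 then p (y + dd) / evalZ f y else 0.
  exists p'; split; first split; first split.
  + exists (map (fun x => x - dd) s) => y; rewrite /p'; case: ifP => [Hf Hp|_]; last by rewrite eqxx.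
    apply/mapP; exists (y + dd); last by rewrite addrK.
    apply: Hs; by move: Hp; apply: contra => /eqP ->; rewrite mul0r.
  + move=> y; rewrite /p'; case: ifP => [Hf Hp|]; last by rewrite eqxx.
    have : E (y + dd) by apply: HE; move: Hp; apply: contra => /eqP ->; rewrite mul0r.
    case/EF => + _; rewrite addrK; exact: E1.
  + move=> y; rewrite /p'; case: ifP => [Hf Hp|]; last by rewrite eqxx.
    have : E (y + dd) by apply: HE; move: Hp; apply: contra => /eqP ->; rewrite mul0r.
    by case/EF => + _; rewrite addrK.
  + move=> b; rewrite /delta /p' subrK; case: ifP => Hf.
    * by rewrite mulrCA mulfV // mulr1.
    * rewrite mulr0; case: (eqVneq (p b) 0) => [->//|Hb].
      by case: (EF b) => /(_ (HE _ Hb)) [_]; rewrite Hf.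
- case=> p' [[[[s Hs] HS] HE] Hd].
  have key b : p b != 0 -> E (b - dd) /\ evalZ f (b - dd) != 0.
    rewrite -Hd /delta mulf_eq0 negb_or => /andP [H1 H2]; split => //; exact: HE.
  split; first split.
  + exists (map (fun x => x + dd) s) => b Hb; apply/mapP; exists (b - dd); last by rewrite subrK.
    apply: Hs; move: Hb; rewrite -Hd /delta mulf_eq0 negb_or => /andP [_ //].
  + move=> b /key /EF; exact: E1.
  + by move=> b /key /EF.
Qed.

Lemma extract (I : ('rV[int]_d -> CC) -> Prop) : monideal h I -> fixes f dd I ->
  exists E : 'rV[int]_d -> Prop,
  [/\ forall a, E a -> inS h a, forall a b, E a -> inS h b -> E (a + b),
      forall b, E b <-> E (b - dd) /\ evalZ f (b - dd) != 0 &
      forall p, I p <-> monideal_of h E p].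
Proof.
case=> E [E1 E2 HI] Hfix; exists E; split => // b.
have Hm c : I (mono c) <-> E c by rewrite HI; exact: mono_in.
split.
- move/Hm/Hfix => [p' [Ip' Hd]]; have := Hd b; rewrite /delta /mono eqxx => H1.
  have : evalZ f (b - dd) * p' (b - dd) != 0 by rewrite H1 oner_neq0.
  rewrite mulf_eq0 negb_or => /andP [Hf Hp]; split => //.
  by case: (proj1 (HI p') Ip') => _; apply.
- case=> Eb Hf; apply/Hm/Hfix.
  pose p' := fun y => if y == b - dd then (evalZ f (b - dd))^-1 else 0.
  exists p'; split.
  + apply/HI; split; first split.
    * exists [:: b - dd] => y; rewrite /p' inE; case: (y =P b - dd) => // _; by rewrite eqxx.
    * move=> y; rewrite /p'; case: (y =P b - dd) => [->|] _; [exact: E1 | by rewrite eqxx].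
    * move=> y; rewrite /p'; case: (y =P b - dd) => [->|] //; by rewrite eqxx.
  + move=> y; rewrite /delta /p' /mono; case: (eqVneq y b) => [->|Hne].
    * by rewrite eqxx mulfV.
    * case: eqP => [/addIr Hy|]; [by rewrite Hy eqxx in Hne | by rewrite mulr0].
Qed.

Definition Ecan c := inS h c /\ exists t, is_pval f dd c t /\ 0 <= t.

Lemma Ecan_char c p : strc c p -> (Ecan c <-> inS h c /\ 0 <= p).
Proof.
move=> Hs; split.
- case=> Hc [t [Ht Ht0]]; split => //.
  by move: Ht0; rewrite (proj1 (strc_pval _ _ Hs t) Ht) divq_ge0.
- case=> Hc Hp; split => //; exists (p%:~R / q%:R); split; first exact/(strc_pval _ _ Hs).
  by rewrite divq_ge0.
Qed.

Lemma ndd_S : inS h (- dd).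
Proof. move=> i; exact: Order.POrderTheory.ltW (Hint i). Qed.

Lemma Ecan_props (G : Good)
  (c3 : forall a b, Vmon' f dd a -> Vmon' f dd b -> ~ (exists s, inS h s /\ a - b = s - e)) :
  [/\ forall a, Ecan a -> inS h a, forall a b, Ecan a -> inS h b -> Ecan (a + b),
      forall b, Ecan b <-> Ecan (b - dd) /\ evalZ f (b - dd) != 0 &
      exists a0, Ecan a0].
Proof.
split.
- by move=> a [].
- move=> a s Ha Hs; case: (G a) => pa Hpa; case: (G (a + s)) => r Hr.
  case/(Ecan_char _ _ Hpa): Ha => Ha Hpa0.
  apply/(Ecan_char _ _ Hr); split; first exact: inS_add.
  case: (lerP 0 r) => // Hr0; exfalso.
  have HA : strc (a + pa *: e) 0 by have := strc_shift _ _ pa Hpa; rewrite subrr.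
  have HB : strc (a + s + r *: e) 0 by have := strc_shift _ _ r Hr; rewrite subrr.
  apply: (c3 _ _ (proj2 (Vmon'_strc G _) HB) (proj2 (Vmon'_strc G _) HA)).
  exists (s + (pa - r - 1) *: (- e)); split.
  + apply: inS_add => //; apply: inS_scale; [lia | exact: negeS].
  + apply/matrixP => i l; rewrite !mxE; ring.
- move=> b; case: (G b) => p Hp.
  have Hbd : b - dd = b + (- q%:Z) *: e by rewrite dde scaleNr.
  have Hp' : strc (b - dd) (p + q%:Z) by rewrite Hbd; have := strc_shift _ _ (- q%:Z) Hp; rewrite opprK.
  rewrite (Ecan_char _ _ Hp) (Ecan_char _ _ Hp').
  have hq := q1.
  have HZ' : Z b (- q%:Z) <-> evalZ f (b - dd) = 0 by rewrite /Z /Vmon Hbd.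
  split.
  + case=> Hb Hp0; split; first split.
    * apply: inS_add => //; exact: ndd_S.
    * lia.
    * apply/eqP => /HZ' /(Hp (- q%:Z) ltac:(lia)); lia.
  + case=> [[Hb Hp0] Hf]; split.
    * by have := Hstep _ Hb Hf; rewrite subrK.
    * case: (lerP 0 p) => // Hneg; case/negP: Hf; apply/eqP/HZ'.
      apply/(Hp (- q%:Z) ltac:(lia)); lia.
- case: (lowS 0) => K0 [_ HK0]; case: (G (0 - K0 *: e)) => p Hp.
  exists ((0 - K0 *: e) + `|p|%:Z *: (- e)).
  have Hp' : strc ((0 - K0 *: e) + `|p|%:Z *: (- e)) (p + `|p|%:Z).
    by rewrite scalerN -scaleNr; have := strc_shift _ _ (- `|p|%:Z) Hp; rewrite opprK.
  apply/(Ecan_char _ _ Hp'); split.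
  + apply: inS_add => //; apply: inS_scale => //; exact: negeS.
  + lia.
Qed.

Lemma monideal_of_ext (E E' : 'rV[int]_d -> Prop) : (forall c, E c <-> E' c) ->
  forall p, monideal_of h E p <-> monideal_of h E' p.
Proof.
move=> H p; split; case=> H1 H2; split => // a /H2; by rewrite H.
Qed.

Theorem main_sec :
  let cond1 := forall a, inS h a -> valuation f dd a <> m_infty in
  let cond2 := forall a, Vmon' f dd a ->
                 forall i : nat, (i < q)%N -> Vmon f (a - i%:Z *: e) in
  let cond3 := forall a b, Vmon' f dd a -> Vmon' f dd b ->
                 ~ (exists s, inS h s /\ a - b = s - e) in
  ((exists I, [/\ monideal h I, nonzero_ideal I & fixes f dd I])
     <-> [/\ cond1, cond2 & cond3]) /\
  ([/\ cond1, cond2 & cond3] ->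
   forall I, monideal h I -> nonzero_ideal I -> fixes f dd I ->
     (forall p, I p <-> gen_monideal h (fun a => Vmon' f dd a /\ inS h a) p) /\
     (forall a, Exp h I a <-> (inS h a /\ exists t, is_pval f dd a t /\ (0 <= t)))).
Proof.
move=> cond1 cond2 cond3.
have getE I : monideal h I -> nonzero_ideal I -> fixes f dd I ->
  exists E : 'rV[int]_d -> Prop,
  [/\ [/\ forall a, E a -> inS h a, forall a b, E a -> inS h b -> E (a + b),
      forall b, E b <-> E (b - dd) /\ evalZ f (b - dd) != 0 &
      exists a0, E a0] & forall p, I p <-> monideal_of h E p].
  move=> Hm [p [Ip [a Hpa]]] Hf; case: (extract I Hm Hf) => E [E1 E2 EF HI].
  exists E; split => //; split => //; exists a; by case: (proj1 (HI p) Ip) => _; apply.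
split; first split.
- case=> I [Hm Hn Hf]; case: (getE I Hm Hn Hf) => E [[E1 E2 EF EN] HI].
  have G := core_good E E1 E2 EF EN.
  split.
  + move=> a _; case: (G a) => p Hp; exact: strc_val _ _ Hp.
  + move=> a /(Vmon'_strc G) Ha i Hi.
    have := proj2 (Ha (- i%:Z) ltac:(lia)) ltac:(lia).
    by rewrite /Z scaleNr.
  + exact: core_cond3 E E1 E2 EF EN.
- case=> c1 c2 c3; have G := conds_good c1 c2.
  case: (Ecan_props G c3) => E1 E2 EF [a0 Ha0].
  exists (monideal_of h Ecan); split.
  + by exists Ecan; split.
  + exists (mono a0); split; first exact/(mono_in Ecan E1).
    by exists a0; rewrite /mono eqxx oner_neq0.
  + exact: fixes_of Ecan E1 EF.
- move=> _ I Hm Hn Hf; case: (getE I Hm Hn Hf) => E [[E1 E2 EF EN] HI].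
  split.
  + move=> p; rewrite HI /gen_monideal; apply: monideal_of_ext => c.
    exact: core_Egen E E1 E2 EF EN c.
  + move=> a; rewrite /Exp HI (mono_in E E1) -(core_Echar E E1 E2 EF EN a).
    split; [by case | move=> Ha; split => //; exact: E1].
Qed.
End Main.

Theorem mainTheorem10
  (d n : nat) (h : 'I_n -> 'rV[int]_d)
  (f : {mpoly CC[d]}) (dd e : 'rV[int]_d) (q : nat) :
  (0 < d)%N ->
  facet_data h ->
  mdvd (Hpoly h dd) f ->
  in_interior h (- dd) ->
  (0 < q)%N -> primitive_vec e -> dd = q%:Z *: e ->
  let cond1 := forall a, inS h a -> valuation f dd a <> m_infty in
  let cond2 := forall a, Vmon' f dd a ->
                 forall i : nat, (i < q)%N -> Vmon f (a - i%:Z *: e) in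
  let cond3 := forall a b, Vmon' f dd a -> Vmon' f dd b ->
                 ~ (exists s, inS h s /\ a - b = s - e) in
  ((exists I, [/\ monideal h I, nonzero_ideal I & fixes f dd I])
     <-> [/\ cond1, cond2 & cond3]) /\
  ([/\ cond1, cond2 & cond3] ->
   forall I, monideal h I -> nonzero_ideal I -> fixes f dd I ->
     (forall p, I p <-> gen_monideal h (fun a => Vmon' f dd a /\ inS h a) p) /\
     (forall a, Exp h I a <-> (inS h a /\ exists t, is_pval f dd a t /\ (0 <= t)))).
Proof.
move=> d0 fd Hdiv Hint q0 pe dde.
exact: (@main_sec d n h f dd e q d0 fd Hdiv Hint q0 pe dde).
Qed.
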